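(* Let $q \ge 2$ and $n > 1$ be integers, let $\Sigma = \{0,1,\dots,q-1\}$, and let $m = 2^n - 1$. Then the truth table $T_n(L_q^m)$ is a binary (i.e. $2$-ary) $Z_{n+1}$ instance.
   Context: Zimin words are defined recursively over an alphabet of variables $x_1, x_2, \dots$ by $Z_1 = x_1$ and $Z_{k+1} = Z_k\, x_{k+1}\, Z_k$; thus $Z_k$ has length $2^k-1$ (e.g. $Z_2 = x_1x_2x_1$, $Z_3 = x_1x_2x_1x_3x_1x_2x_1$). A word $W$ over an alphabet $A$ is an instance of a word $V$ (a ''$V$ instance'') if there is a non-erasing monoid homomorphism $\phi$ from words over the letters of $V$ to $A^+$ (every letter is sent to a nonempty word over $A$) with $\phi(V) = W$. $L_q^m$ denotes the sequence of all $q^m$ words of length $m$ over $\Sigma$ listed in lexicographic order (with $0<1<\dots<q-1$; equivalently, ordered by their value as base-$q$ numerals). The truth table $T_n(L_q^m) = t_1 t_2 \cdots t_{q^m}$ is the word of length $q^m$ over $\{0,1\}$ such that $t_i = 1$ if and only if the $i$-th word of $L_q^m$ is a $Z_n$ instance. For example, for $q=2$, $n=2$, $m=3$ one has $T_2(L_2^3) = 10100101$. *)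

(* Defs.v *)
From Stdlib Require Import ClassicalDescription.
From mathcomp Require Import all_boot.
Set Implicit Arguments. Unset Strict Implicit. Unset Printing Implicit Defensive.

(* Words are sequences of natural numbers (letters).  Variables x_i are
   encoded as the natural number i. *)

(* Zimin words: zimin 1 = [:: 1], zimin k.+1 = zimin k ++ [:: k.+1] ++ zimin k.
   (zimin 0 = [::] is an auxiliary base case, never used in the statement.) *)
Fixpoint zimin (k : nat) : seq nat :=
  if k is k'.+1 then zimin k' ++ k'.+1 :: zimin k' else [::].

Definition is_instance (V W : seq nat) : Prop :=
  exists phi : nat -> seq nat,
    (forall x, x \in V -> phi x != [::]) /\ flatten (map phi V) = W.

(* The i-th (0-based) word of length m over {0,...,q-1} in lexicographic
   order: the base-q representation of i with m digits, most significant first. *)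
Definition lex_word (q m i : nat) : seq nat :=
  [seq (i %/ q ^ (m - j.+1)) %% q | j <- iota 0 m].

Definition lex_list (q m : nat) : seq (seq nat) :=
  [seq lex_word q m i | i <- iota 0 (q ^ m)].

Definition indic (P : Prop) : nat :=
  if excluded_middle_informative P then 1 else 0.

Definition truth_table (n q m : nat) : seq nat :=
  [seq indic (is_instance (zimin n) w) | w <- lex_list q m].

Definition binary_word (W : seq nat) : bool := all (fun a => a < 2) W.

(* Main.v *)
From Stdlib Require Import ClassicalDescription.
Require Import Defs.
From mathcomp Require Import all_boot zify.

Fixpoint valw (q : nat) (w : seq nat) : nat :=
  if w is d :: w' then d * q ^ (size w') + valw q w' else 0.

Lemma valw_cat q a b : valw q (a ++ b) = valw q a * q ^ (size b) + valw q b.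
Proof.
elim: a => [|d a IH] //=. rewrite IH size_cat expnD. nia.
Qed.

Lemma size_lex q m i : size (lex_word q m i) = m.
Proof. by rewrite /lex_word size_map size_iota. Qed.

Lemma lex_S q m i : lex_word q m.+1 i = (i %/ q ^ m) %% q :: lex_word q m i.
Proof.
rewrite /lex_word /= subn1 /=; congr (_ :: _).
rewrite -(addn0 1) iotaDl -map_comp; apply: eq_map => j /=.
by rewrite add1n subSS.
Qed.

Lemma lex_shift q s x v (hq : 0 < q) : lex_word q s (x * q ^ s + v) = lex_word q s v.
Proof.
rewrite /lex_word; apply/eq_in_map => j; rewrite mem_iota add0n => /andP[_ hj].
have -> : q ^ s = q * q ^ (s - j.+1) * q ^ j.
  by rewrite -expnS mulnC -expnD; congr (_ ^ _); lia.
have -> : x * (q * q ^ (s - j.+1) * q ^ j) = (x * q ^ j * q) * q ^ (s - j.+1) by nia.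
by rewrite divnMDl ?expn_gt0 ?hq // modnMDl.
Qed.

Lemma lex_val q w (hq : 0 < q) : all (fun d => d < q) w -> lex_word q (size w) (valw q w) = w.
Proof.
elim: w => [|d w IH] /=; first by [].
move=> /andP[hd hw]; rewrite lex_S lex_shift // IH //.
have hv : valw q w < q ^ size w.
  clear IH; elim: w hw => [|e w IH2] /= ; first by [].
  move=> /andP[he hw]; have := IH2 hw; rewrite expnS. nia.
by rewrite divnMDl ?expn_gt0 ?hq // divn_small // addn0 modn_small.
Qed.

Lemma val_lex q m i (hq : 0 < q) : valw q (lex_word q m i) = i %% q ^ m.
Proof.
elim: m => [|m IH]; first by rewrite /lex_word /= modn1.
rewrite lex_S /= IH size_lex.
set a := i %/ q ^ m.
have hi : i = a %/ q * q ^ m.+1 + (a %% q * q ^ m + i %% q ^ m).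
  rewrite {1}(divn_eq i (q ^ m)) -/a {1}(divn_eq a q) expnS. nia.
rewrite [in RHS]hi modnMDl; symmetry; apply: modn_small.
have h1 : a %% q < q by rewrite ltn_pmod.
have h2 : i %% q ^ m < q ^ m by rewrite ltn_pmod ?expn_gt0 ?hq.
have h3 : (a %% q).+1 * q ^ m <= q * q ^ m by rewrite leq_mul2r h1 orbT.
rewrite expnS; move: h2 h3; clear; move: (a %% q) (i %% q ^ m) (q ^ m) => x y z; rewrite mulSn; lia.
Qed.

Lemma size_zimin n : size (zimin n) = 2 ^ n - 1.
Proof.
elim: n => [|n IH] //=. rewrite size_cat /= IH expnS.
have := expn_gt0 2 n; lia.
Qed.

Lemma size_flatten_ge (phi : nat -> seq nat) V :
  (forall x, x \in V -> phi x != [::]) -> size V <= size (flatten (map phi V)).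
Proof.
elim: V => [|x V IH] //= h. rewrite size_cat.
have h1 : 0 < size (phi x) by rewrite lt0n size_eq0 h ?mem_head.
have h2 : size V <= size (flatten (map phi V)) by apply: IH => y hy; apply: h; rewrite inE hy orbT.
by rewrite -add1n; apply: leq_add.
Qed.

Lemma flatten_single (phi : nat -> seq nat) V :
  (forall x, x \in V -> phi x != [::]) -> size (flatten (map phi V)) = size V ->
  flatten (map phi V) = map (fun x => head 0 (phi x)) V.
Proof.
elim: V => [|x V IH] //= h. rewrite size_cat => hs.
have h1 : 0 < size (phi x) by rewrite lt0n size_eq0 h ?mem_head.
have h0 : forall y, y \in V -> phi y != [::] by move=> y hy; apply: h; rewrite inE hy orbT.
have h2 := @size_flatten_ge phi V h0.
move: hs h1 h2; set a := size (phi x); set b := size (flatten _); move=> hs h1 h2.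
have [e1 e2] : a = 1 /\ b = size V.
  move: hs h2 {IH h h0}; move: (size V) => k; lia.
rewrite IH //.
by move: e1; rewrite /a; case: (phi x) => [|a' [|b' l]].
Qed.

Lemma inst_iff n q i (hq : 0 < q) (hi : i < q ^ (2 ^ n - 1)) :
  is_instance (zimin n) (lex_word q (2 ^ n - 1) i) <->
  exists c : nat -> nat, (forall j, c j < q) /\ i = valw q (map c (zimin n)).
Proof.
split.
- move=> [phi [hne hfl]].
  have hs : size (flatten (map phi (zimin n))) = size (zimin n) by rewrite hfl size_lex size_zimin.
  have e := @flatten_single phi _ hne hs. rewrite hfl in e.
  exists (fun x => head 0 (phi x) %% q); split; first by move=> j; rewrite ltn_pmod.
  have -> : map (fun x => head 0 (phi x) %% q) (zimin n) = lex_word q (2 ^ n - 1) i.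
    rewrite (map_comp (modn^~ q) (fun x => head 0 (phi x))) -e /lex_word -map_comp.
    by apply: eq_map => j /=; rewrite modn_mod.
  by rewrite val_lex // modn_small.
- move=> [c [hc ->]].
  have hall : all (fun d => d < q) (map c (zimin n)) by apply/allP => d /mapP[x _ ->].
  have := @lex_val q _ hq hall; rewrite size_map size_zimin => ->.
  exists (fun x => [:: c x]); split; first by [].
  by rewrite flatten_map1.
Qed.

Fixpoint sw (q n j : nat) : nat :=
  if n is n'.+1 then (if j == n'.+1 then q ^ (2 ^ n' - 1) else sw q n' j * (q ^ (2 ^ n') + 1))
  else 0.

Lemma valZ q n c : valw q (map c (zimin n)) = \sum_(1 <= j < n.+1) c j * sw q n j.
Proof.
elim: n => [|n IH]; first by rewrite big_geq.
rewrite /= map_cat valw_cat /= size_map size_zimin IH.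
rewrite [RHS]big_nat_recr //= eqxx.
rewrite [in RHS](@eq_big_nat _ _ _ 1 n.+1 _ (fun j => (c j * sw q n j) * (q ^ (2 ^ n) + 1))); last first.
  move=> j /andP[_ hj]; rewrite (_ : (j == n.+1) = false) ?mulnA //; apply/negbTE; lia.
rewrite -big_distrl /=.
have -> : (2 ^ n - 1).+1 = 2 ^ n by have := expn_gt0 2 n; lia.
set V := \sum_(1 <= j < n.+1) _. lia.
Qed.

Definition Vs (s c : nat -> nat) n := \sum_(1 <= j < n.+1) c j * s j.
Definition Rs (s : nat -> nat) n k := \sum_(k.+1 <= j < n.+1) s j.
Definition AS q s n x := exists c : nat -> nat, (forall j, c j < q) /\ x = Vs s c n.

Lemma term_le (F : nat -> nat) a b j : a <= j < b -> F j <= \sum_(a <= i < b) F i.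
Proof.
move=> /andP[h1 h2]; rewrite (@big_cat_nat _ _ _ j) //; last exact: ltnW.
rewrite [X in _ <= _ + X]big_ltn //.
by rewrite addnCA leq_addr.
Qed.

Lemma Vs_split s c n k : 1 <= k <= n ->
  Vs s c n = \sum_(1 <= j < k) c j * s j + c k * s k + \sum_(k.+1 <= j < n.+1) c j * s j.
Proof.
move=> /andP[h1 h2]; rewrite /Vs (@big_cat_nat _ _ _ k) //; last exact: leqW.
rewrite [X in _ + X = _]big_ltn //.
by rewrite addnA.
Qed.

Lemma Rs_pred s n k : 1 <= k <= n -> Rs s n k.-1 = s k + Rs s n k.
Proof.
move=> /andP[h1 h2]; rewrite /Rs prednK // big_ltn //.
Qed.

Lemma Rs_mono s n j k : j <= k -> k <= n -> Rs s n k <= Rs s n j.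
Proof.
move=> h1 h2; rewrite /Rs (@big_cat_nat _ _ _ k.+1 j.+1 n.+1) //=; first exact: leq_addl.
Qed.

Lemma tail_bound q s c n k : (forall j, c j < q) ->
  \sum_(k.+1 <= j < n.+1) c j * s j <= (q - 1) * Rs s n k.
Proof.
move=> hc; rewrite /Rs big_distrr /=; apply: leq_sum => j _.
rewrite leq_mul2r; have := hc j; move=> h; apply/orP; right; lia.
Qed.

Lemma border q s n k x (hq : 0 < q)
  (G : forall k, 1 <= k <= n -> (q - 1) * Rs s n k < s k) :
  1 <= k <= n -> x < 1 + (q - 1) * Rs s n k ->
  (AS q s n x <-> AS q s n (x + (q - 1) * s k)).
Proof.
move=> hk hx; have Gk := G k hk.
split.
- move=> [c [hc hV]]; rewrite (@Vs_split s c n k hk) in hV.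
  have ck0 : c k = 0.
    case: (posnP (c k)) => // hpos.
    have : s k <= c k * s k by rewrite leq_pmull.
    lia.
  exists (fun j => if j == k then q - 1 else c j); split.
    by move=> j; case: (j == k) => //; lia.
  rewrite (@Vs_split _ _ n k hk) eqxx.
  rewrite (@eq_big_nat _ _ _ 1 k _ (fun j => c j * s j)); last first.
    by move=> j hj; rewrite (_ : (j == k) = false) //; apply/negbTE; lia.
  rewrite [X in _ = _ + _ + X](@eq_big_nat _ _ _ k.+1 n.+1 _ (fun j => c j * s j)); last first.
    by move=> j hj; rewrite (_ : (j == k) = false) //; apply/negbTE; lia.
  lia.
- move=> [c [hc hV]]; move: hV; rewrite (@Vs_split s c n k hk) => hV.
  have P0 : \sum_(1 <= j < k) c j * s j = 0.
    case: (boolP (all (fun j => c j == 0) (index_iota 1 k))) => hall.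
      rewrite big1_seq // => j /andP[_ hj]; move/allP: hall => /(_ j hj) /eqP ->.
      by rewrite mul0n.
    exfalso; move/allPn: hall => [j hj hcj]; move: hj; rewrite mem_index_iota => hj.
    have hjn : 1 <= j <= n by lia.
    have Gj := G j hjn.
    have hm : Rs s n k.-1 <= Rs s n j by apply: Rs_mono; lia.
    have hp := @Rs_pred s n k hk.
    have t1 : c j * s j <= \sum_(1 <= i < k) c i * s i by apply: (@term_le (fun i => c i * s i)).
    have t2 : s j <= c j * s j by rewrite leq_pmull // lt0n.
    have t3 : (q - 1) * Rs s n k.-1 <= (q - 1) * Rs s n j by rewrite leq_mul2l hm orbT.
    rewrite hp mulnDr in t3.
    lia.
  have tb := @tail_bound q s c n k hc.
  have ckq : c k = q - 1.
    have := hc k; case: (ltnP (c k) (q - 1)) => h1 h2; last by lia.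
    have : (c k).+1 * s k <= (q - 1) * s k by rewrite leq_mul2r h1 orbT.
    rewrite mulSn. lia.
  exists (fun j => if j == k then 0 else c j); split.
    by move=> j; case: (j == k) => //; lia.
  rewrite (@Vs_split _ _ n k hk) eqxx mul0n addn0.
  rewrite (@eq_big_nat _ _ _ 1 k _ (fun j => c j * s j)); last first.
    by move=> j hj; rewrite (_ : (j == k) = false) //; apply/negbTE; lia.
  rewrite [X in _ = _ + X](@eq_big_nat _ _ _ k.+1 n.+1 _ (fun j => c j * s j)); last first.
    by move=> j hj; rewrite (_ : (j == k) = false) //; apply/negbTE; lia.
  rewrite ckq in hV. lia.
Qed.

Lemma Rs_rec q n k : k <= n ->
  Rs (sw q n.+1) n.+1 k = Rs (sw q n) n k * (q ^ (2 ^ n) + 1) + q ^ (2 ^ n - 1).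
Proof.
move=> hk; rewrite /Rs big_nat_recr //= eqxx.
rewrite big_distrl /=; congr (_ + _); apply: eq_big_nat => j /andP[_ hj].
by rewrite (_ : (j == n.+1) = false) //; apply/negbTE; lia.
Qed.

Lemma Rs_nn s n : Rs s n n = 0.
Proof. by rewrite /Rs big_geq. Qed.

Lemma sw_G q n k : 0 < q -> 1 <= k <= n -> (q - 1) * Rs (sw q n) n k < sw q n k.
Proof.
move=> hq; elim: n k => [|n IH] k hk; first by lia.
case: (ltnP n k) => hkn.
  have -> : k = n.+1 by lia.
  by rewrite Rs_nn muln0 /= eqxx expn_gt0 hq.
rewrite Rs_rec // /=.
rewrite (_ : (k == n.+1) = false); last by apply/negbTE; lia.
have h := IH k ltac:(lia).
have e : q ^ (2 ^ n) = q * q ^ (2 ^ n - 1).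
  by rewrite -expnS; congr (_ ^ _); have := expn_gt0 2 n; lia.
rewrite e; move: h; move: (Rs (sw q n) n k) (sw q n k) (q ^ (2 ^ n - 1)) => r w a h.
nia.
Qed.

Lemma sw_H q n k : 1 < q -> 1 < n -> 1 <= k <= n -> (q - 1) * Rs (sw q n) n k + 2 <= sw q n k.
Proof.
move=> hq; case: n => [|n] //= hn hk.
case: (ltnP n k) => hkn.
  have -> : k = n.+1 by lia.
  rewrite Rs_nn muln0 /= eqxx.
  have : q ^ 1 <= q ^ (2 ^ n - 1).
    rewrite leq_exp2l //; have : 2 ^ 1 <= 2 ^ n by rewrite leq_exp2l.
    lia.
  lia.
rewrite Rs_rec // /=.
rewrite (_ : (k == n.+1) = false); last by apply/negbTE; lia.
have h := @sw_G q n k ltac:(lia) ltac:(lia).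
have e : q ^ (2 ^ n) = q * q ^ (2 ^ n - 1).
  by rewrite -expnS; congr (_ ^ _); have := expn_gt0 2 n; lia.
have ha : 0 < q ^ (2 ^ n - 1) by rewrite expn_gt0; lia.
rewrite e; move: h ha; move: (Rs (sw q n) n k) (sw q n k) (q ^ (2 ^ n - 1)) => r w a h ha.
nia.
Qed.

Lemma valw_const q (w : seq nat) : 0 < q -> valw q (map (fun _ => q - 1) w) + 1 = q ^ size w.
Proof.
move=> hq; elim: w => [|x w IH] //=. rewrite size_map expnS.
move: IH; move: (valw _ _) (q ^ size w) => v a IH. nia.
Qed.

Lemma L0 q n : 0 < q -> 1 + (q - 1) * Rs (sw q n) n 0 = q ^ (2 ^ n - 1).
Proof.
move=> hq; have := @valw_const q (zimin n) hq; rewrite valZ size_zimin /Rs big_distrr /=.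
lia.
Qed.

Lemma indic_iff (P Q : Prop) : (P <-> Q) -> indic P = indic Q.
Proof.
rewrite /indic => h; case: excluded_middle_informative => hp; case: excluded_middle_informative => hq' //.
- by exfalso; apply: hq'; apply h.
- by exfalso; apply: hp; apply h.
Qed.

Lemma indic_lt2 P : indic P < 2.
Proof. by rewrite /indic; case: excluded_middle_informative. Qed.

Lemma zimin_le k x : x \in zimin k -> x <= k.
Proof.
elim: k => [|k IH] //=. rewrite mem_cat inE => /orP[/IH h|/orP[/eqP ->|/IH h]] //; lia.
Qed.

Lemma inst_ext k X y : is_instance (zimin k) X -> y != [::] ->
  is_instance (zimin k.+1) (X ++ y ++ X).
Proof.
move=> [phi [hne hfl]] hy.
exists (fun x => if x == k.+1 then y else phi x); split.
  move=> x hxin; case: ifP => [_|hneq]; first by [].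
  by apply: hne; move: hxin; rewrite /= mem_cat inE hneq /= orbb.
have e : map (fun x => if x == k.+1 then y else phi x) (zimin k) = map phi (zimin k).
  apply/eq_in_map => x /zimin_le hx; rewrite (_ : (x == k.+1) = false) //; apply/negbTE; lia.
by rewrite /= map_cat /= flatten_cat /= e eqxx hfl.
Qed.

Lemma chain q n (hq : 1 < q) (hn : 1 < n) j : j <= n ->
  is_instance (zimin j.+1)
    (map (fun i => indic (AS q (sw q n) n i)) (iota 0 (1 + (q - 1) * Rs (sw q n) n (n - j)))).
Proof.
set t := fun i => indic (AS q (sw q n) n i).
elim: j => [|j IH] hj.
  rewrite subn0 Rs_nn muln0 /=.
  exists (fun _ => [:: t 0]); split; first by [].
  by [].
have hk : 1 <= n - j <= n by lia.
have e1 : n - j.+1 = (n - j).-1 by lia.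
rewrite e1 (@Rs_pred _ n (n - j) hk).
set k := n - j in hk e1 *.
set L := 1 + (q - 1) * Rs (sw q n) n k.
set D := (q - 1) * sw q n k.
have H := @sw_H q n k hq hn hk.
have hD : L + 1 <= D.
  rewrite /L /D; have : sw q n k <= (q - 1) * sw q n k by rewrite leq_pmull; lia.
  lia.
have -> : 1 + (q - 1) * (sw q n k + Rs (sw q n) n k) = L + (D - L) + L.
  rewrite /L /D mulnDr; lia.
rewrite iotaD iotaD !map_cat -catA.
have -> : 0 + (L + (D - L)) = D + 0 by lia.
rewrite (iotaDl D 0 L) -map_comp add0n.
have -> : map (t \o addn D) (iota 0 L) = map t (iota 0 L).
  apply/eq_in_map => x; rewrite mem_iota add0n => hx /=.
  have G : forall k0, 1 <= k0 <= n -> (q - 1) * Rs (sw q n) n k0 < sw q n k0.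
    by move=> k0 hk0; apply: sw_G; lia.
  have hq0 : 0 < q by lia.
  rewrite /t; apply: indic_iff; rewrite addnC.
  have := @border q (sw q n) n k x hq0 G hk hx; rewrite -/D.
  by move=> h; split; apply h.
apply: inst_ext; first by apply: IH; lia.
rewrite -size_eq0 size_map size_iota; lia.
Qed.

Theorem theorem2 (q n : nat) (hq : 2 <= q) (hn : 1 < n) :
  let m := 2 ^ n - 1 in
  binary_word (truth_table n q m) /\
  is_instance (zimin n.+1) (truth_table n q m).
Proof.
move=> m; split.
  by apply/allP => x /mapP[w _ ->]; apply: indic_lt2.
have hq0 : 0 < q by lia.
have -> : truth_table n q m = map (fun i => indic (AS q (sw q n) n i)) (iota 0 (q ^ m)).
  rewrite /truth_table /lex_list -map_comp; apply/eq_in_map => i; rewrite mem_iota add0n => hi /=.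
  apply: indic_iff; rewrite inst_iff //; rewrite /AS /Vs.
  by split; move=> [c [hc e]]; exists c; split => //; rewrite e ?valZ // -valZ.
have := @chain q n hq hn n (leqnn n).
by rewrite subnn L0.
Qed.
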